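(* Let $G$ be a finite group. Then $\Delta_D(G)$ is Eulerian (i.e. has an Eulerian circuit) if and only if $|G|$ is odd.
   Context: For a finite group $G$, let $M(G)$ denote its Schur multiplier. A Schur cover of $G$ is a group $\tilde{G}$ with a central extension $\{e\}\to M(G)\xrightarrow{\iota}\tilde{G}\xrightarrow{\pi}G\to\{e\}$ such that $\iota(M(G))\subseteq Z(\tilde{G})\cap[\tilde{G},\tilde{G}]$ and $\tilde G$ has maximal order among such extensions. The deep commuting graph $\Delta_D(G)$ is the simple graph with vertex set $G$ in which two distinct vertices are adjacent if and only if their preimages under $\pi$ commute in $\tilde{G}$ (independent of the choice of Schur cover and preimages). *)

(* Defs.v *)
From mathcomp Require Import all_boot all_fingroup all_solvable.
Set Implicit Arguments. Unset Strict Implicit. Unset Printing Implicit Defensive.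
Import GroupScope.
Local Open Scope group_scope.

Definition stem_extension (hT gT : finGroupType) (H : {group hT})
    (G : {group gT}) (f : {morphism H >-> gT}) : Prop :=
  f @* H = G /\ 'ker f \subset 'Z(H) :&: [~: H, H].

Definition schur_cover (hT gT : finGroupType) (H : {group hT})
    (G : {group gT}) (f : {morphism H >-> gT}) : Prop :=
  stem_extension G f /\
  forall (kT : finGroupType) (K : {group kT}) (g : {morphism K >-> gT}),
    stem_extension G g -> (#|K| <= #|H|)%N.

Definition deep_adj (hT gT : finGroupType) (H : {group hT})
    (G : {group gT}) (f : {morphism H >-> gT}) : rel gT :=
  fun x y => [&& x \in G, y \in G, x != y &
    [forall a in H, forall b in H,
       ((f a == x) && (f b == y)) ==> (a * b == b * a)]].

Definition has_eulerian_circuit (T : finType) (V : {set T}) (e : rel T) : Prop :=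
  exists (v0 : T) (p : seq T),
    [/\ v0 \in V, path e v0 p, last v0 p = v0 &
      forall x y, x \in V -> y \in V -> e x y ->
        count_mem [set x; y] (pairmap (fun u w => [set u; w]) v0 p) = 1%N].

(* Main.v *)
Require Import Defs.
From mathcomp Require Import all_boot all_fingroup all_solvable.
From mathcomp Require Import zify.
Set Implicit Arguments. Unset Strict Implicit. Unset Printing Implicit Defensive.



Definition steps (T : finType) (x : T) (p : seq T) :=
  pairmap (fun u w => [set u; w]) x p.

Lemma steps_count (T : finType) (e : rel T) (irr : irreflexive e) (u x : T) p :
  path e x p ->
  count (fun s : {set T} => u \in s) (steps x p) = count_mem u (belast x p) + count_mem u p.
Proof.
elim: p x => [|y p IH] x //= /andP[exy pp].
rewrite IH // in_set2.
have nxy : x != y by apply/eqP => E; rewrite E irr in exy.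
rewrite (eq_sym u x) (eq_sym u y).
case: (eqVneq x u) => [<-|xu].
  by rewrite eq_sym (negbTE nxy) /=; lia.
case: (eqVneq y u) => [<-|yu] /=; lia.
Qed.

Lemma count_belast (T : eqType) (u x : T) p :
  count_mem u (belast x p) + (last x p == u) = (x == u) + count_mem u p.
Proof.
have := congr1 (count_mem u) (lastI x p).
by rewrite -cats1 count_cat /= addn0 => <-.
Qed.

Lemma steps_mem (T : finType) (x : T) p s z :
  s \in steps x p -> z \in s -> z \in x :: p.
Proof.
elim: p x => [|y p IH] x //=; rewrite inE => /orP[/eqP->|].
  by rewrite in_set2 !inE => /orP[->|->] //; rewrite orbT.
by move=> sp zs; rewrite inE (IH _ sp zs) orbT.
Qed.

Lemma steps_edge (T : finType) (e : rel T) (x : T) p s :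
  path e x p -> s \in steps x p -> exists a b, s = [set a; b] /\ e a b.
Proof.
elim: p x => [|y p IH] x //= /andP[exy pp]; rewrite inE => /orP[/eqP->|sp].
  by exists x, y.
exact: IH sp.
Qed.

Lemma set2_inj (T : finType) (u : T) : injective (fun w => [set u; w]).
Proof.
move=> w w' /= E.
have : w \in [set u; w'] by rewrite -E !inE eqxx orbT.
rewrite !inE => /orP[/eqP wu|/eqP //].
have : w' \in [set u; w] by rewrite E !inE eqxx orbT.
by rewrite wu !inE orbb => /eqP.
Qed.

Lemma count_used (T : finType) (e : rel T) (sym : symmetric e) (irr : irreflexive e)
  (u x : T) p : path e x p -> uniq (steps x p) ->
  count (fun s : {set T} => u \in s) (steps x p) =
  #|[set w | e u w & [set u; w] \in steps x p]|.
Proof.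
move=> pp us.
have -> : count (fun s : {set T} => u \in s) (steps x p) =
   #|[set s | (s \in steps x p) && (u \in s)]|.
  rewrite -size_filter.
  have /card_uniqP <- := filter_uniq (fun s : {set T} => u \in s) us.
  by apply: eq_card => s; rewrite inE mem_filter andbC.
have -> : [set s | (s \in steps x p) && (u \in s)] =
   [set [set u; w] | w in [set w | e u w & [set u; w] \in steps x p]].
  apply/setP => s; rewrite inE; apply/andP/imsetP.
    move=> [sp us']; have [a [b [sab eab]]] := steps_edge pp sp.
    subst s; move: us'; rewrite !inE => /orP[/eqP ua|/eqP ub]; subst.
      by exists b; rewrite // inE eab sp.
    by exists a; last rewrite setUC; rewrite // inE sym eab setUC sp.
  by move=> [w]; rewrite inE => /andP[_ ws] ->; rewrite ws !inE eqxx.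
by rewrite card_imset //; apply: set2_inj.
Qed.
Definition trail (T : finType) (V : {set T}) (e : rel T) (x : T) (p : seq T) :=
  [&& x \in V, path e x p & uniq (steps x p)].

Lemma steps_rcons (T : finType) (x w : T) p :
  steps x (rcons p w) = rcons (steps x p) [set last x p; w].
Proof. by rewrite /steps -cats1 pairmap_cat -cats1. Qed.

Lemma extend_end (T : finType) (V : {set T}) (e : rel T) x p w :
  trail V e x p -> e (last x p) w -> [set last x p; w] \notin steps x p ->
  trail V e x (rcons p w).
Proof.
case/and3P=> xV pp up ew nin.
by rewrite /trail xV rcons_path pp ew steps_rcons rcons_uniq nin up.
Qed.

Lemma trail_bound (T : finType) (V : {set T}) (e : rel T) x p :
  trail V e x p -> size p <= #|{: {set T}}|.
Proof.
case/and3P=> _ _ /card_uniqP; rewrite /steps size_pairmap => <-.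
exact: max_card.
Qed.

Lemma unused_odd (T : finType) (V : {set T}) (e : rel T)
  (sym : symmetric e) (irr : irreflexive e)
  (inV : forall x y, e x y -> x \in V)
  (ev : forall x, x \in V -> ~~ odd #|[set y | e x y]|) x p u :
  trail V e x p -> odd (count (fun s : {set T} => u \in s) (steps x p)) ->
  exists w, e u w && ([set u; w] \notin steps x p).
Proof.
case/and3P=> xV pp up od.
have uV : u \in V.
  have /hasP[s sp us] : has (fun s : {set T} => u \in s) (steps x p).
    by rewrite has_count; move: od; case: count.
  have [a [b [sab eab]]] := steps_edge pp sp.
  move: us; rewrite sab !inE => /orP[/eqP->|/eqP->]; first exact: inV eab.
  by apply: (inV _ a); rewrite sym.
move: od; rewrite (count_used sym irr u pp up) => od.
have sub : [set w | e u w & [set u; w] \in steps x p] \subset [set y | e u y].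
  by apply/subsetP => w; rewrite !inE => /andP[].
case: (boolP ([set y | e u y] \subset [set w | e u w & [set u; w] \in steps x p])).
  move=> sub2; have E : [set w | e u w & [set u; w] \in steps x p] = [set y | e u y].
    by apply/eqP; rewrite eqEsubset sub sub2.
  by rewrite E in od; move: (ev u uV); rewrite od.
case/subsetPn=> w; rewrite !inE => euw nw; exists w.
by move: nw; rewrite euw /=.
Qed.

Lemma euler_step (T : finType) (V : {set T}) (e : rel T)
  (sym : symmetric e) (irr : irreflexive e)
  (inV : forall x y, e x y -> x \in V) (c : T) (cV : c \in V)
  (hub : forall x, x \in V -> x != c -> e c x)
  (ev : forall x, x \in V -> ~~ odd #|[set y | e x y]|) x p :
  trail V e x p ->
  has_eulerian_circuit V e \/ exists y q, trail V e y q /\ size q = (size p).+1.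
Proof.
move=> tr; have /and3P[xV pp up] := tr.
case: (eqVneq (last x p) x) => [cl|ncl]; last first.
  right; set u := last x p.
  have od : odd (count (fun s : {set T} => u \in s) (steps x p)).
    rewrite (steps_count irr u pp).
    have cb := count_belast u x p; rewrite eqxx eq_sym (negbTE ncl) /= in cb.
    rewrite add0n in cb; rewrite -cb.
    by rewrite addnA addnn oddD odd_double.
  have [w /andP[euw nw]] := unused_odd sym irr inV ev tr od.
  exists x, (rcons p w); split; last by rewrite size_rcons.
  exact: extend_end.
case: (boolP [exists a, exists b, e a b && ([set a; b] \notin steps x p)]); last first.
  move/existsPn=> H; left; exists x, p; split => // a b _ _ eab.
  rewrite (count_uniq_mem _ up).
  move/existsPn: (H a) => /(_ b); rewrite eab /= negbK => ->. done.
case/existsP=> a /existsP[b /andP[eab nab]].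
have [u [w [uw uwalk nin]]] :
    exists u w, [/\ e u w, u \in x :: p & [set u; w] \notin steps x p].
  case: (boolP (a \in x :: p)) => aw; first by exists a, b.
  case: (boolP (b \in x :: p)) => bw.
    by exists b, a; rewrite sym setUC.
  have notin z y : z \notin x :: p -> [set y; z] \notin steps x p.
    move=> zw; apply/negP => yz.
    have zin : z \in [set y; z] by rewrite !inE eqxx orbT.
    by move: (steps_mem yz zin); rewrite (negbTE zw).
  case: (boolP (c \in x :: p)) => cw.
    exists c, a; split => //; last exact: notin.
    apply: hub; first exact: inV eab.
    by apply/eqP => E; rewrite E cw in aw.
  exists x, c; split; [|exact: mem_head|exact: notin].
  rewrite sym; apply: hub => //.
  by apply/eqP => E; rewrite -E mem_head in cw.
right.
move: uwalk; rewrite inE => /orP[/eqP ux|uin].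
  rewrite ux in uw nin; exists x, (rcons p w); split; last by rewrite size_rcons.
  by apply: extend_end; rewrite ?cl.
case/splitPr: uin cl pp up nin tr => p1 p2 cl pp up nin tr.
rewrite last_cat /= in cl.
exists u, (p2 ++ p1 ++ [:: u; w]); split; last by rewrite !size_cat /=; lia.
have uV : u \in V by exact: inV uw.
rewrite /trail uV.
move: pp; rewrite cat_path /= => /and3P[pp1 elu pp2].
rewrite cat_path pp2 cl cat_path pp1 /= elu uw /=.
have perm : perm_eq (steps u (p2 ++ p1 ++ [:: u; w]))
                    (rcons (steps x (p1 ++ u :: p2)) [set u; w]).
  apply/seq.permP => P; rewrite /steps !pairmap_cat -cats1 !count_cat /= cl !addn0.
  move: (count P (pairmap _ u p2)) (count P (pairmap _ x p1)) (nat_of_bool (P [set last x p1; u])) (nat_of_bool (P [set u; w])) => A B C D; lia.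
by rewrite (perm_uniq perm) rcons_uniq nin up.
Qed.

Lemma euler (T : finType) (V : {set T}) (e : rel T)
  (sym : symmetric e) (irr : irreflexive e)
  (inV : forall x y, e x y -> x \in V) (c : T) (cV : c \in V)
  (hub : forall x, x \in V -> x != c -> e c x)
  (ev : forall x, x \in V -> ~~ odd #|[set y | e x y]|) :
  has_eulerian_circuit V e.
Proof.
have t0 : trail V e c [::] by rewrite /trail cV.
suff H : forall k x p, trail V e x p -> #|{: {set T}}| - size p <= k ->
    has_eulerian_circuit V e by exact: (H _ c [::] t0).
elim=> [|k IH] x p tr hk;
  case: (euler_step sym irr inV cV hub ev tr) => // [[y [q [tq sq]]]].
  have := trail_bound tq; lia.
apply: (IH y q tq); lia.
Qed.

Lemma euler_even (T : finType) (V : {set T}) (e : rel T)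
  (sym : symmetric e) (irr : irreflexive e)
  (inV : forall x y, e x y -> x \in V) u :
  has_eulerian_circuit V e -> ~~ odd #|[set y | e u y]|.
Proof.
case=> x [p [xV pp cl H]].
have inV' a b : e a b -> b \in V by rewrite sym; apply: inV.
have up : uniq (steps x p).
  apply: count_mem_uniq => s; case: (boolP (s \in steps x p)) => sp.
    have [a [b [sab eab]]] := steps_edge pp sp.
    by rewrite sab (H a b (inV _ _ eab) (inV' _ _ eab) eab).
  exact: count_memPn.
have E : [set w | e u w & [set u; w] \in steps x p] = [set y | e u y].
  apply/setP => w; rewrite !inE; case euw: (e u w) => //=.
  have := H u w (inV _ _ euw) (inV' _ _ euw) euw.
  by rewrite (count_uniq_mem _ up); case: (_ \in _).
rewrite -E -(count_used sym irr u pp up) (steps_count irr u pp).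
have := count_belast u x p; rewrite cl addnC => /addnI ->.
by rewrite addnn odd_double.
Qed.

Import GroupScope.

Lemma adj_char (gT hT : finGroupType) (G : {group gT}) (H : {group hT})
    (f : {morphism H >-> gT}) :
  f @* H = G -> 'ker f \subset 'Z(H) -> forall a y, a \in H ->
  deep_adj G f (f a) y = (y \in f @* 'C_H[a]) && (f a != y).
Proof.
move=> fH kZ a y aH.
have cen k z : k \in 'ker f -> z \in H -> commute k z.
  by move=> kk zH; have /centerP[_ ck] := subsetP kZ k kk; exact: ck.
have faG : f a \in G by rewrite -fH mem_morphim.
rewrite /deep_adj faG /=.
apply/idP/idP.
  case/and3P => yG ne Q; rewrite ne andbT.
  move: yG; rewrite -fH => /morphimP[b bH _ yE]; subst y.
  have := forall_inP (forall_inP Q a aH) b bH.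
  rewrite !eqxx /= => /eqP ab.
  rewrite mem_morphim // inE bH /=; apply/cent1P.
  by rewrite /commute ab.
case/andP => yC ne; rewrite ne /=.
case/morphimP: yC => b bH /setIP[_ /cent1P cba] yE.
apply/andP; split; first by rewrite -fH yE mem_morphim.
apply/forall_inP => a' a'H; apply/forall_inP => b' b'H.
apply/implyP => /andP[/eqP fa' /eqP fb']; apply/eqP.
have [k kk ->] := ker_rcoset a'H aH fa'.
have [k' kk' ->] : exists2 k', k' \in 'ker f & b' = k' * b.
  by apply: ker_rcoset => //; rewrite fb'.
have kH : k \in H by move: kk => /setIP[].
have k'H : k' \in H by move: kk' => /setIP[].
have c1 : commute (k' * b) k by apply/commute_sym/cen; rewrite ?groupM.
have c2 : commute (k' * b) a.
  apply/commute_sym/commuteM; first by apply/commute_sym/cen.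
  exact/commute_sym.
exact/commute_sym/commuteM.
Qed.

Unset Implicit Arguments.

Theorem theorem3p4 (gT : finGroupType) (G : {group gT})
    (hT : finGroupType) (H : {group hT}) (f : {morphism H >-> gT}) :
  schur_cover G f ->
  (has_eulerian_circuit G (deep_adj G f) <-> odd #|G|).
Proof.
move=> [[fH kZ'] _].
have kZ : 'ker f \subset 'Z(H) by move: kZ' => /subsetIP[].
have inV x y : deep_adj G f x y -> x \in G by case/andP.
have irr : irreflexive (deep_adj G f).
  by move=> x; rewrite /deep_adj eqxx /= !andbF.
have sym : symmetric (deep_adj G f).
  move=> x y; rewrite /deep_adj.
  case: (x \in G); case: (y \in G) => //=; rewrite eq_sym; congr (_ && _).
  apply/forall_inP/forall_inP => Q a aH; apply/forall_inP => b bH;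
    apply/implyP => /andP[fa fb]; have := forall_inP (Q b bH) a aH;
    by rewrite fa fb /= => /eqP ->.
have Nx x : x \in G -> exists2 a, a \in H &
    [set y | deep_adj G f x y] = (f @* 'C_H[a]) :\ x /\ x \in f @* 'C_H[a].
  rewrite -{1}fH => /morphimP[a aH _ ->]; exists a => //; split.
    by apply/setP => y; rewrite inE (adj_char fH kZ _ aH) !inE andbC eq_sym.
  by rewrite mem_morphim // inE aH cent1id.
have N1 : [set y | deep_adj G f 1 y] = G :\ 1.
  apply/setP => y; rewrite !inE -(morph1 f) (adj_char fH kZ _ (group1 H)).
  by rewrite morph1 cent11T setIT fH eq_sym andbC.
split.
  move=> eul; have := euler_even sym irr inV 1 eul.
  rewrite N1; have := cardsD1 1 G; rewrite group1.
  have := cardG_gt0 G; case: #|G| => // n _ [->] /=; by case: (odd _).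
move=> oG; apply: (euler sym irr inV (group1 G)).
  move=> x xG x1; have : x \in G :\ 1 by rewrite !inE x1.
  by rewrite -N1 inE.
move=> x xG; have [a aH [-> xC]] := Nx x xG.
have : odd #|f @* 'C_H[a]|.
  apply: (dvdn_odd _ oG); rewrite -fH; apply/cardSg/morphimS/subsetIl.
by rewrite (cardsD1 x) xC /= => ->.
Qed.
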